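(* Let $\mathbb{F}$, $\mathfrak g$, $\mathcal C$, $\mathcal C^{du}$, $M$, $Lie(\cdot)$ be as in the context. Let $x\in\mathfrak g\setminus\{0\}$ be such that for every object $V$ of $\mathcal C$: (1) $x_V$ is locally nilpotent, and (2) $\exp(tx_V)\in End_{V^{du}}(V)$ for all $t\in\mathbb F$. Then $x$ is an integrable locally finite element of $\mathfrak g$. Furthermore: (a) for every $t\in\mathbb F$ there is an element $\exp(tx)\in M$ acting on every object $V$ by $\exp(tx_V)$; (b) equipping $\mathbb F$ with the polynomial functions $\mathbb F[t]$, the map $u_x:(\mathbb F,+)\to M$, $t\mapsto\exp(tx)$, is a morphism of monoids and a closed embedding of sets with coordinate rings; denote its image $U_x$; (c) $Lie(U_x)=\mathbb Fx$.
   Context: Let $\mathbb F$ be a field of characteristic $0$, $\mathfrak g$ a Lie algebra over $\mathbb F$. $\mathcal C$: full subcategory of $\mathfrak g$-modules closed under isomorphism and submodules, containing a direct sum and tensor product of any two objects and a one-dimensional trivial module, with only $0\in\mathfrak g$ acting trivially on all objects. $x_V$ = action. Category of duals: point-separating $V^{du}\subseteq V^*$ with $\phi\circ x_V\in V^{du}$ ($x\in\mathfrak g$), $\psi\circ\alpha\in V^{du}$ for morphisms $\alpha:V\to W$, $\psi\in W^{du}$, $(V\oplus W)^{du}=V^{du}\oplus W^{du}$, $V^{du}\otimes W^{du}\subseteq(V\otimes W)^{du}$. $End_{V^{du}}(V)=\{\varphi:\phi\circ\varphi\in V^{du}\ \forall\phi\}$. $Nat$: families $(m_V)_V$, $m_V\in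 End_{V^{du}}(V)$, commuting with all morphisms. $M=\{m\in Nat:m_{V\otimes W}=m_V\otimes m_W,\ m_{V_0}=id$ for trivial one-dimensional $V_0\}$; $\mathbb F[M]=\{f_{\phi v}\}$, $f_{\phi v}(m)=\phi(m_Vv)$; Zariski topology via common zero sets. $Lie(M)=\{y\in Nat:y_{V\otimes W}=y_V\otimes id+id\otimes y_W,\ y_{V_0}=0,\ \exists\,\delta_y:\mathbb F[M]\to\mathbb F$ with $\delta_y(f_{\phi v})=\phi(y_Vv)\}$; for a submonoid $N$ with vanishing ideal $I(N)$, $Lie(N)=\{y\in Lie(M):\delta_y(I(N))=0\}$; $\mathfrak g$ is identified with $\{(y_V)_V\}\subseteq Nat$. For a subalgebra $\mathfrak s$ acting locally finitely, $\mathcal C(\mathfrak s)$ is the category of $\mathfrak s$-modules isomorphic to finite-dimensional $\mathfrak s$-submodules of objects of $\mathcal C$ (all $\mathfrak s$-maps as morphisms), $M(\mathfrak s)$ the monoid obtained from it by the same construction with full duals $U^{du}=U^*$, with its matrix-coefficient coordinate ring and Zariski topology; it acts on objects $V$ of $\mathcal C$ by $m_Vv:=m_Uv$ for finite-dimensional $\mathfrak s$-submodules $U\ni v$. An element $e\in\mathfrak g$ is integrable locally finite if it acts locally finitely on all objects and there is a Zariski dense submonoid $D\subseteq M(\mathbb Fe)$ with $d_V\in End_{V^{du}}(V)$ for all $d\in D$ and objects $V$. Sets with coordinate rings: morphism $\varphi:X\to Y$ means $f\circ\varphi\in\mathbb F[X]$ for $f\in\mathbb F[Y]$; closed embedding: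 injective morphism with $\{f\circ\varphi\}=\mathbb F[X]$ and Zariski-closed image. *)

(* Defs.v *)
From HB Require Import structures.
From mathcomp Require Import all_boot all_order all_algebra.
From Stdlib Require Import ClassicalEpsilon.
Set Implicit Arguments. Unset Strict Implicit. Unset Printing Implicit Defensive.
Import Order.TTheory GRing.Theory Num.Theory.
Local Open Scope ring_scope.

Section LinAlg.
Variable F : fieldType.

Definition islin (U V : lmodType F) (f : U -> V) : Prop :=
  forall (a : F) (u v : U), f (a *: u + v) = a *: f u + f v.

Definition islinF (U : lmodType F) (phi : U -> F) : Prop :=
  forall (a : F) (u v : U), phi (a *: u + v) = a * phi u + phi v.

Definition isbilin (U V W : lmodType F) (b : U -> V -> W) : Prop :=
  (forall v, islin (fun u => b u v)) /\ (forall u, islin (b u)).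

Definition is_tensor (U V T : lmodType F) (b : U -> V -> T) : Prop :=
  isbilin b /\
  (forall (Z : lmodType F) (beta : U -> V -> Z), isbilin beta ->
     exists L : T -> Z, islin L /\ forall u v, L (b u v) = beta u v) /\
  (forall (Z : lmodType F) (L1 L2 : T -> Z), islin L1 -> islin L2 ->
     (forall u v, L1 (b u v) = L2 (b u v)) -> forall t, L1 t = L2 t).

Definition inspan (V : lmodType F) (s : seq V) (v : V) : Prop :=
  exists c : 'I_(size s) -> F, v = \sum_(i < size s) c i *: s`_i.

Definition findim (V : lmodType F) : Prop := exists s : seq V, forall v, inspan s v.

Definition onedim (V : lmodType F) : Prop :=
  exists v0 : V, v0 != 0 /\ forall v, exists c : F, v = c *: v0.

Definition locfin (V : lmodType F) (f : V -> V) : Prop :=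
  forall v, exists s : seq V, inspan s v /\ forall u, u \in s -> inspan s (f u).

Definition locnil (V : lmodType F) (f : V -> V) : Prop :=
  forall v, exists n : nat, iter n f v = 0.

(* a nilpotency index of f at v (0 if there is none) *)
Definition nilidx (V : lmodType F) (f : V -> V) (v : V) : nat :=
  match excluded_middle_informative (exists n : nat, iter n f v == 0) with
  | left H => xchoose H
  | right _ => 0%N
  end.

Definition expo (V : lmodType F) (f : V -> V) (t : F) (v : V) : V :=
  \sum_(k < nilidx f v) (t ^+ k / (k`!)%:R) *: iter k f v.

Section Generic.
Variables (Obj : Type) (car : Obj -> lmodType F) (inO : Obj -> Prop)
  (hom : forall V W : Obj, (car V -> car W) -> Prop)
  (tens : forall V W T : Obj, (car V -> car W -> car T) -> Prop)
  (triv : Obj -> Prop)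
  (du : forall V : Obj, (car V -> F) -> Prop).

Definition natfamily := forall V : Obj, car V -> car V.

Definition idfam : natfamily := fun V v => v.
Definition compfam (m1 m2 : natfamily) : natfamily := fun V v => m1 V (m2 V v).

Definition EndDu (V : Obj) (f : car V -> car V) : Prop :=
  islin f /\ forall phi, du phi -> du (fun v => phi (f v)).

Definition isNat (m : natfamily) : Prop :=
  (forall V, inO V -> EndDu (m V)) /\
  (forall V W (al : car V -> car W), inO V -> inO W -> hom al ->
     forall v, al (m V v) = m W (al v)).

Definition inMon (m : natfamily) : Prop :=
  isNat m /\
  (forall V W T (b : car V -> car W -> car T), inO V -> inO W -> inO T ->
     tens b -> forall v w, m T (b v w) = b (m V v) (m W w)) /\
  (forall V0, inO V0 -> triv V0 -> forall v, m V0 v = v).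

Definition coordfun (V : Obj) (phi : car V -> F) (v : car V) : natfamily -> F :=
  fun m => phi (m V v).

Definition inCoord (f : natfamily -> F) : Prop :=
  exists V (phi : car V -> F) (v : car V),
    inO V /\ du phi /\ forall m, inMon m -> f m = coordfun phi v m.

Definition zeroset (S : (natfamily -> F) -> Prop) : natfamily -> Prop :=
  fun m => inMon m /\ forall f, S f -> f m = 0.

Definition zclosed (Z : natfamily -> Prop) : Prop :=
  exists S : (natfamily -> F) -> Prop, (forall f, S f -> inCoord f) /\
    forall m, Z m <-> zeroset S m.

Definition zdense (D : natfamily -> Prop) : Prop :=
  forall S : (natfamily -> F) -> Prop, (forall f, S f -> inCoord f) ->
    (forall d, D d -> zeroset S d) -> forall m, inMon m -> zeroset S m.

Definition submonoid (D : natfamily -> Prop) : Prop :=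
  (forall d, D d -> inMon d) /\ D idfam /\
  (forall d1 d2, D d1 -> D d2 -> D (compfam d1 d2)).

Definition isDelta (y : natfamily) (delta : (natfamily -> F) -> F) : Prop :=
  (forall f g, inCoord f -> inCoord g -> (forall m, inMon m -> f m = g m) ->
     delta f = delta g) /\
  (forall V (phi : car V -> F) (v : car V), inO V -> du phi ->
     delta (coordfun phi v) = phi (y V v)).

Definition inLieM (y : natfamily) : Prop :=
  isNat y /\
  (forall V W T (b : car V -> car W -> car T), inO V -> inO W -> inO T ->
     tens b -> forall v w, y T (b v w) = b (y V v) w + b v (y W w)) /\
  (forall V0, inO V0 -> triv V0 -> forall v, y V0 v = 0) /\
  (exists delta, isDelta y delta).

Definition inLie (N : natfamily -> Prop) (y : natfamily) : Prop :=
  inLieM y /\ exists delta, isDelta y delta /\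
    forall f, inCoord f -> (forall m, N m -> f m = 0) -> delta f = 0.

End Generic.

End LinAlg.

Section LieMod.
Variables (F : fieldType) (g : lmodType F) (br : g -> g -> g).

Definition is_lie : Prop :=
  isbilin br /\ (forall x, br x x = 0) /\
  (forall x y z, br x (br y z) + br y (br z x) + br z (br x y) = 0).

Definition is_rep (V : lmodType F) (act : g -> V -> V) : Prop :=
  (forall x, islin (act x)) /\ (forall v, islin (fun x => act x v)) /\
  (forall x y v, act (br x y) v = act x (act y v) - act y (act x v)).

Record gmod := GMod {
  gcar :> lmodType F;
  gact : g -> gcar -> gcar;
  gact_rep : is_rep gact }.

Definition ghom (V W : gmod) (al : V -> W) : Prop :=
  islin al /\ forall x v, al (gact x v) = gact x (al v).

Definition gtensor (V W T : gmod) (b : V -> W -> T) : Prop :=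
  is_tensor b /\ forall x v w, gact x (b v w) = b (gact x v) w + b v (gact x w).

Definition gtriv (V : gmod) : Prop := onedim V /\ forall x v, gact x v = 0 :> V.

Definition gdsum (V W S : gmod) (i1 : V -> S) (i2 : W -> S) (p1 : S -> V)
    (p2 : S -> W) : Prop :=
  ghom i1 /\ ghom i2 /\ ghom p1 /\ ghom p2 /\
  (forall v, p1 (i1 v) = v) /\ (forall w, p2 (i2 w) = w) /\
  (forall w, p1 (i2 w) = 0) /\ (forall v, p2 (i1 v) = 0) /\
  (forall s, i1 (p1 s) + i2 (p2 s) = s).

Definition good_category (C : gmod -> Prop) : Prop :=
  (* closed under isomorphism and submodules (= injective g-maps into objects) *)
  (forall (V W : gmod) (al : W -> V), C V -> ghom al -> injective al -> C W) /\
  (forall V W : gmod, C V -> C W -> exists (S : gmod) i1 i2 p1 p2, C S /\ @gdsum V W S i1 i2 p1 p2) /\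
  (forall V W : gmod, C V -> C W -> exists (T : gmod) (b : V -> W -> T), C T /\ gtensor b) /\
  (exists V0, C V0 /\ gtriv V0) /\
  (forall x, (forall V, C V -> forall v, gact x v = 0 :> V) -> x = 0).

Definition dual_category (C : gmod -> Prop) (du : forall V : gmod, (V -> F) -> Prop)
  : Prop :=
  (forall V : gmod, C V ->
     (forall phi, du V phi -> islinF phi) /\
     du V (fun _ => 0) /\
     (forall a phi psi, du V phi -> du V psi -> du V (fun v => a * phi v + psi v)) /\
     (forall v : V, v != 0 -> exists phi, du V phi /\ phi v != 0) /\
     (forall x phi, du V phi -> du V (fun v => phi (gact x v)))) /\
  (forall (V W : gmod) (al : V -> W) psi, C V -> C W -> ghom al -> du W psi ->
     du V (fun v => psi (al v))) /\
  (forall (V W S : gmod) i1 i2 p1 p2, C V -> C W -> C S -> @gdsum V W S i1 i2 p1 p2 ->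
     forall psi, du S psi <->
       exists phi chi, du V phi /\ du W chi /\
         forall s, psi s = phi (p1 s) + chi (p2 s)) /\
  (forall (V W T : gmod) (b : V -> W -> T), C V -> C W -> C T -> gtensor b ->
     forall phi psi (L : T -> F), du V phi -> du W psi -> islinF L ->
       (forall v w, L (b v w) = phi v * psi w) -> du T L).

Definition Mg (C : gmod -> Prop) du := @inMon F gmod gcar C ghom gtensor gtriv du.
Definition coordg (C : gmod -> Prop) du := @inCoord F gmod gcar C ghom gtensor gtriv du.
Definition zclosedg (C : gmod -> Prop) du := @zclosed F gmod gcar C ghom gtensor gtriv du.
Definition Lieg (C : gmod -> Prop) du := @inLie F gmod gcar C ghom gtensor gtriv du.

(* an Fe-module is a vector space with the endomorphism by which e acts *)
Record smod := SMod { scar :> lmodType F; sE : scar -> scar }.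

Definition shom (U W : smod) (al : U -> W) : Prop :=
  islin al /\ forall u, al (sE u) = sE (al u).

Definition stensor (U W T : smod) (b : U -> W -> T) : Prop :=
  is_tensor b /\ forall u w, sE (b u w) = b (sE u) w + b u (sE w).

Definition striv (U : smod) : Prop := onedim U /\ forall u, sE u = 0 :> U.

(* objects of C(Fe): Fe-modules isomorphic to finite-dimensional Fe-submodules
   of objects of C *)
Definition inCs (C : gmod -> Prop) (e : g) (U : smod) : Prop :=
  islin (@sE U) /\ findim U /\
  exists V : gmod, C V /\ exists iota : U -> V,
    islin iota /\ injective iota /\ forall u, iota (sE u) = gact e (iota u).

Definition fulldu (U : smod) (phi : U -> F) : Prop := islinF phi.

Definition Ms C e := @inMon F smod scar (inCs C e) shom stensor striv fulldu.
Definition zdenses C e := @zdense F smod scar (inCs C e) shom stensor striv fulldu.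
Definition submonoids C e := @submonoid F smod scar (inCs C e) shom stensor striv fulldu.

Definition sacts (C : gmod -> Prop) (e : g) (d : natfamily scar) (V : gmod) (h : V -> V)
  : Prop :=
  forall (U : smod) (iota : U -> V), inCs C e U -> islin iota -> injective iota ->
    (forall u, iota (sE u) = gact e (iota u)) ->
    forall u, h (iota u) = iota (d U u).

Definition int_loc_fin (C : gmod -> Prop) (du : forall V : gmod, (V -> F) -> Prop)
  (e : g) : Prop :=
  (forall V, C V -> locfin (gact e : V -> V)) /\
  exists D : natfamily scar -> Prop,
    submonoids C e D /\ zdenses C e D /\
    forall d, D d -> forall V, C V ->
      exists h : V -> V, sacts C e d h /\ @EndDu F gmod gcar du V h.

End LieMod.

Definition expfam (F : fieldType) (g : lmodType F) (br : g -> g -> g) (x : g) (t : F)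
  : natfamily (@gcar F g br) := fun V => expo (gact x : V -> V) t.
Arguments expfam {F g} br x t V.

Definition Ufam (F : fieldType) (g : lmodType F) (br : g -> g -> g)
  (C : gmod br -> Prop) (x : g) : natfamily (@gcar F g br) -> Prop :=
  fun m => exists t : F, forall V, C V -> forall v, m V v = expfam br x t V v.

(* Main.v *)
Require Import Defs.
From HB Require Import structures.
From mathcomp Require Import all_boot all_order all_algebra.
From mathcomp Require Import zify.
From Stdlib Require Import Classical ClassicalEpsilon FunctionalExtensionality.
Set Implicit Arguments. Unset Strict Implicit. Unset Printing Implicit Defensive.
Import Order.TTheory GRing.Theory Num.Theory.
Local Open Scope ring_scope.

Section Lin.
Variable F : fieldType.
Implicit Types U V W T : lmodType F.

Lemma islin0 U V (f : U -> V) : islin f -> f 0 = 0.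
Proof.
move=> H; have h := H 1 0 0; rewrite !scale1r addr0 in h.
by have := congr1 (fun z => z - f 0) h; rewrite /= subrr addrK => <-.
Qed.

Lemma islinD U V (f : U -> V) : islin f -> forall u v, f (u + v) = f u + f v.
Proof. by move=> H u v; have := H 1 u v; rewrite !scale1r. Qed.

Lemma islinZ U V (f : U -> V) : islin f -> forall a u, f (a *: u) = a *: f u.
Proof. by move=> H a u; rewrite -[a *: u]addr0 H (islin0 H) addr0. Qed.

Lemma islinN U V (f : U -> V) : islin f -> forall u, f (- u) = - f u.
Proof. by move=> H u; rewrite -scaleN1r islinZ // scaleN1r. Qed.

Lemma islinB U V (f : U -> V) : islin f -> forall u v, f (u - v) = f u - f v.
Proof. by move=> H u v; rewrite islinD // islinN. Qed.

Lemma islin_sum U V (f : U -> V) : islin f ->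
  forall (I : Type) (r : seq I) (P : pred I) (G : I -> U),
  f (\sum_(i <- r | P i) G i) = \sum_(i <- r | P i) f (G i).
Proof.
move=> H I r P G; apply: (big_morph f (islinD H) (islin0 H)).
Qed.

Lemma islin_comp U V W (f : U -> V) (g : V -> W) : islin f -> islin g -> islin (fun u => g (f u)).
Proof. by move=> Hf Hg a u v; rewrite Hf Hg. Qed.

Lemma islin_iter U (f : U -> U) : islin f -> forall k, islin (iter k f).
Proof.
move=> H; elim=> [|k IH] a u v //=.
by rewrite IH H.
Qed.

Lemma islinF_lin U (phi : U -> F) : islinF phi -> @islin F U F^o phi.
Proof. by []. Qed.

Lemma islinF0 U (phi : U -> F) : islinF phi -> phi 0 = 0.
Proof. move=> H; exact: (islin0 (islinF_lin H)). Qed.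
Lemma islinFD U (phi : U -> F) : islinF phi -> forall u v, phi (u + v) = phi u + phi v.
Proof. move=> H; exact: (islinD (islinF_lin H)). Qed.
Lemma islinFZ U (phi : U -> F) : islinF phi -> forall a u, phi (a *: u) = a * phi u.
Proof. move=> H; exact: (islinZ (islinF_lin H)). Qed.
Lemma islinFN U (phi : U -> F) : islinF phi -> forall u, phi (- u) = - phi u.
Proof. move=> H; exact: (islinN (islinF_lin H)). Qed.
Lemma islinFB U (phi : U -> F) : islinF phi -> forall u v, phi (u - v) = phi u - phi v.
Proof. move=> H; exact: (islinB (islinF_lin H)). Qed.
Lemma islinF_sum U (phi : U -> F) : islinF phi ->
  forall (I : Type) (r : seq I) (P : pred I) (G : I -> U),
  phi (\sum_(i <- r | P i) G i) = \sum_(i <- r | P i) phi (G i).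
Proof. move=> H; exact: (islin_sum (islinF_lin H)). Qed.

Lemma iter_lin0 U (f : U -> U) : islin f -> forall k, iter k f 0 = 0.
Proof. by move=> H k; apply: islin0; apply: islin_iter. Qed.

Lemma iter_zero U (f : U -> U) : islin f -> forall n m v, iter n f v = 0 -> (n <= m)%N -> iter m f v = 0.
Proof.
move=> H n m v Hn Hnm; rewrite -(subnK Hnm) iterD Hn; exact: iter_lin0.
Qed.

Lemma iter_comm U V (f : U -> U) (g : V -> V) (al : U -> V) :
  (forall u, al (f u) = g (al u)) -> forall k u, al (iter k f u) = iter k g (al u).
Proof. by move=> H; elim=> [|k IH] u //=; rewrite H IH. Qed.

Lemma sum_trunc U (f : U -> U) : islin f -> forall (c : nat -> F) v n m,
  iter n f v = 0 -> (n <= m)%N ->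
  \sum_(k < m) c k *: iter k f v = \sum_(k < n) c k *: iter k f v.
Proof.
move=> H c v n m Hn Hnm.
rewrite -(big_mkord xpredT (fun k => c k *: iter k f v)).
rewrite -(big_mkord xpredT (fun k => c k *: iter k f v)).
rewrite (big_cat_nat (leq0n n) Hnm) /=.
rewrite [X in _ + X]big1_seq ?addr0 // => k /andP[_].
rewrite mem_index_iota => /andP[Hk _].
by rewrite (iter_zero H Hn Hk) scaler0.
Qed.

Lemma expoE U (f : U -> U) : islin f -> forall t v n, iter n f v = 0 ->
  expo f t v = \sum_(k < n) (t ^+ k / (k`!)%:R) *: iter k f v.
Proof.
move=> H t v n Hn; rewrite /expo /nilidx.
case: excluded_middle_informative => [E|E]; last first.
  by exfalso; apply: E; exists n; apply/eqP.
have HN := eqP (xchooseP E).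
rewrite -(sum_trunc H (fun k => t ^+ k / (k`!)%:R) HN (leq_maxl (xchoose E) n)).
by rewrite -(sum_trunc H (fun k => t ^+ k / (k`!)%:R) Hn (leq_maxr (xchoose E) n)).
Qed.

End Lin.

Section Expo.
Variable F : fieldType.
Implicit Types U V W T : lmodType F.

Lemma nil_common U (f : U -> U) : islin f -> locnil f -> forall u v : U,
  exists n, iter n f u = 0 /\ iter n f v = 0.
Proof.
move=> H Hn u v; have [n1 H1] := Hn u; have [n2 H2] := Hn v.
exists (maxn n1 n2); split; [exact: (iter_zero H H1 (leq_maxl _ _))|exact: (iter_zero H H2 (leq_maxr _ _))].
Qed.

Lemma expo_lin U (f : U -> U) : islin f -> locnil f -> forall t, islin (expo f t).
Proof.
move=> H Hn t a u v; have [n [Hu Hv]] := nil_common H Hn u v.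
have Huv : iter n f (a *: u + v) = 0 by rewrite islin_iter // Hu Hv scaler0 addr0.
rewrite !(expoE H t Hu) (expoE H t Hv) (expoE H t Huv) scaler_sumr -big_split /=.
apply: eq_bigr => k _; rewrite islin_iter // scalerDr !scalerA mulrC //.
Qed.

Lemma expo0 U (f : U -> U) : islin f -> locnil f -> forall v, expo f 0 v = v.
Proof.
move=> H Hn v; have [n Hv] := Hn v.
rewrite (expoE H 0 (iter_zero H Hv (leqnSn n))) big_ord_recl /= expr0 divr1 scale1r.
by rewrite big1 ?addr0 // => i _; rewrite expr0n /= mul0r scale0r.
Qed.

Lemma expo_nat U V (f : U -> U) (g : V -> V) (al : U -> V) :
  islin f -> islin g -> islin al -> locnil f ->
  (forall u, al (f u) = g (al u)) -> forall t v, al (expo f t v) = expo g t (al v).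
Proof.
move=> Hf Hg Hal Hn Hc t v; have [n Hv] := Hn v.
have Hv' : iter n g (al v) = 0 by rewrite -(iter_comm Hc) Hv islin0.
rewrite (expoE Hf t Hv) (expoE Hg t Hv') islin_sum //.
by apply: eq_bigr => k _; rewrite islinZ // (iter_comm Hc).
Qed.

Lemma expo_poly U (f : U -> U) (phi : U -> F) : islin f -> islinF phi ->
  forall v n, iter n f v = 0 -> forall t,
  phi (expo f t v) = (\poly_(k < n) (phi (iter k f v) / (k`!)%:R)).[t].
Proof.
move=> Hf Hp v n Hv t; rewrite (expoE Hf t Hv) horner_poly islinF_sum //.
by apply: eq_bigr => k _; rewrite islinFZ // mulrC mulrA mulrAC.
Qed.

Lemma triangle (Z : zmodType) (G : nat -> nat -> Z) N :
  \sum_(k < N) \sum_(i < k.+1) G i (k - i)%N = \sum_(i < N) \sum_(j < N - i) G i j.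
Proof.
elim: N => [|N IH]; first by rewrite !big_ord0.
rewrite big_ord_recr /= IH [X in _ = X]big_ord_recr /=.
rewrite [\sum_(i < N.+1) G i (N - i)%N]big_ord_recr /=.
have -> : \sum_(i < N) \sum_(j < N.+1 - i) G i j =
    \sum_(i < N) \sum_(j < N - i) G i j + \sum_(i < N) G i (N - i)%N.
  rewrite -big_split; apply: eq_bigr => i _ /=.
  by rewrite subSn ?(ltnW (ltn_ord i)) // big_ord_recr.
by rewrite subSnn subnn big_ord1 addrA.
Qed.

Lemma cauchy (Z : zmodType) (G : nat -> nat -> Z) n :
  (forall i j, (n <= i)%N -> G i j = 0) -> (forall i j, (n <= j)%N -> G i j = 0) ->
  \sum_(k < n + n) \sum_(i < k.+1) G i (k - i)%N = \sum_(i < n) \sum_(j < n) G i j.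
Proof.
move=> H1 H2; rewrite triangle big_split_ord /= [X in _ + X]big1 ?addr0; last first.
  by move=> i _; apply: big1 => j _; apply: H1; rewrite /= leq_addr.
apply: eq_bigr => i _ /=; rewrite -addnBA ?(ltnW (ltn_ord i)) // big_split_ord /=.
by rewrite [X in _ + X]big1 ?addr0 // => j _; apply: H2; rewrite /= leq_addr.
Qed.

Lemma leibniz U W T (f : U -> U) (g : W -> W) (h : T -> T) (b : U -> W -> T) :
  islin h -> (forall w, islin (fun u => b u w)) -> (forall u, islin (b u)) ->
  (forall u w, h (b u w) = b (f u) w + b u (g w)) ->
  forall k u w, iter k h (b u w) =
    \sum_(i < k.+1) ('C(k, i))%:R *: b (iter i f u) (iter (k - i) g w).
Proof.
move=> Hh Hb1 Hb2 Hr; elim=> [|k IH] u w.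
  by rewrite big_ord_recl big_ord0 /= addr0 bin0 scale1r.
rewrite iterS IH islin_sum //.
under eq_bigr do rewrite islinZ // Hr scalerDr.
rewrite big_split /= [RHS]big_ord_recl /= bin0 scale1r.
have -> : \sum_(i < k.+1) 'C(k.+1, bump 0 i)%:R *:
     b (f (iter (0 + i) f u)) (iter (k.+1 - bump 0 i) g w) =
   \sum_(i < k.+1) 'C(k, i)%:R *: b (f (iter i f u)) (iter (k - i) g w) +
   \sum_(i < k.+1) 'C(k, i.+1)%:R *: b (f (iter i f u)) (iter (k - i) g w).
  rewrite -big_split; apply: eq_bigr => i _ /=.
  rewrite add0n. rewrite -[bump 0 i]/(i.+1). rewrite binS. rewrite subSS. rewrite natrD. by rewrite scalerDl addrC.
rewrite [RHS]addrCA; congr (_ + _).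
rewrite big_ord_recl /= bin0 subn0 scale1r; congr (_ + _).
rewrite [RHS]big_ord_recr /= bin_small // scale0r addr0.
apply: eq_bigr => i _; rewrite add0n -[bump 0 i]/(i.+1); congr (_ *: b _ _).
by rewrite -iterS subnSK.
Qed.

Lemma natf_neq0 : [pchar F] =i pred0 -> forall n, (0 < n)%N -> n%:R != 0 :> F.
Proof. by move=> HF n Hn; rewrite ((pcharf0P F).1 HF n) -lt0n. Qed.

Lemma fact_neq0 : [pchar F] =i pred0 -> forall n, (n`!)%:R != 0 :> F.
Proof. by move=> HF n; apply: natf_neq0 => //; apply: fact_gt0. Qed.

Lemma coef_split : [pchar F] =i pred0 -> forall (s t : F) i k, (i <= k)%N ->
  s ^+ i * t ^+ (k - i) * ('C(k, i))%:R / (k`!)%:R =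
  s ^+ i / (i`!)%:R * (t ^+ (k - i) / ((k - i)`!)%:R).
Proof.
move=> HF s t i k Hik.
have Hk : (k`!)%:R = ('C(k, i))%:R * ((i`!)%:R * ((k - i)`!)%:R) :> F.
  by rewrite -!natrM bin_fact.
have HC : ('C(k, i))%:R != 0 :> F by apply: natf_neq0; rewrite // bin_gt0.
have H1 := fact_neq0 HF i; have H2 := fact_neq0 HF (k - i).
rewrite Hk invfM invfM !mulrA mulfK //.
by rewrite -!mulrA; congr (_ * _); rewrite mulrC -!mulrA; congr (_ * _); rewrite mulrC.
Qed.

Lemma expo_tensor U W T (f : U -> U) (g : W -> W) (h : T -> T) (b : U -> W -> T) :
  [pchar F] =i pred0 ->
  islin f -> islin g -> islin h -> locnil f -> locnil g ->
  (forall w, islin (fun u => b u w)) -> (forall u, islin (b u)) ->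
  (forall u w, h (b u w) = b (f u) w + b u (g w)) ->
  forall t u w, expo h t (b u w) = b (expo f t u) (expo g t w).
Proof.
move=> HF Hf Hg Hh Hnf Hng Hb1 Hb2 Hr t u w.
have [n1 Hu1] := Hnf u; have [n2 Hw2] := Hng w.
pose n := maxn n1 n2.
have Hu : iter n f u = 0 by apply: (iter_zero Hf Hu1); rewrite leq_maxl.
have Hw : iter n g w = 0 by apply: (iter_zero Hg Hw2); rewrite leq_maxr.
have Hz : iter (n + n) h (b u w) = 0.
  rewrite (leibniz Hh Hb1 Hb2 Hr); apply: big1 => i _.
  case: (leqP n i) => Hi.
    by rewrite (iter_zero Hf Hu Hi) (islin0 (Hb1 _)) scaler0.
  have Hi' : (n <= n + n - i)%N by rewrite -addnBA ?leq_addr // ltnW.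
  by rewrite (iter_zero Hg Hw Hi') (islin0 (Hb2 _)) scaler0.
pose a k := t ^+ k / (k`!)%:R.
pose G i j := (a i * a j) *: b (iter i f u) (iter j g w).
have G1 : forall i j, (n <= i)%N -> G i j = 0.
  by move=> i j Hi; rewrite /G (iter_zero Hf Hu Hi) (islin0 (Hb1 _)) scaler0.
have G2 : forall i j, (n <= j)%N -> G i j = 0.
  by move=> i j Hj; rewrite /G (iter_zero Hg Hw Hj) (islin0 (Hb2 _)) scaler0.
rewrite (expoE Hh t Hz) (expoE Hf t Hu) (expoE Hg t Hw).
transitivity (\sum_(i < n) \sum_(j < n) G i j); last first.
  rewrite (islin_sum (Hb1 _)); apply: eq_bigr => i _.
  rewrite (islinZ (Hb1 _)) (islin_sum (Hb2 _)) scaler_sumr; apply: eq_bigr => j _.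
  by rewrite (islinZ (Hb2 _)) scalerA.
rewrite -(cauchy G1 G2); apply: eq_bigr => k _.
rewrite (leibniz Hh Hb1 Hb2 Hr) scaler_sumr; apply: eq_bigr => i _.
rewrite scalerA /G /a; congr (_ *: _).
have Hik : (i <= k)%N by rewrite -ltnS ltn_ord.
rewrite -(coef_split HF t t Hik) -exprD subnKC //.
by rewrite mulrAC.
Qed.

Lemma expoD U (f : U -> U) : [pchar F] =i pred0 -> islin f -> locnil f ->
  forall s t v, expo f (s + t) v = expo f s (expo f t v).
Proof.
move=> HF Hf Hn s t v; have [n Hv] := Hn v.
have Hz : iter (n + n) f v = 0 by apply: (iter_zero Hf Hv); rewrite leq_addr.
pose a (r : F) k := r ^+ k / (k`!)%:R.
pose G i j := (a s i * a t j) *: iter (i + j) f v.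
have G1 : forall i j, (n <= i)%N -> G i j = 0.
  move=> i j Hi; rewrite /G (iter_zero Hf Hv) ?scaler0 //.
  exact: (leq_trans Hi (leq_addr _ _)).
have G2 : forall i j, (n <= j)%N -> G i j = 0.
  move=> i j Hj; rewrite /G (iter_zero Hf Hv) ?scaler0 //.
  exact: (leq_trans Hj (leq_addl _ _)).
rewrite (expoE Hf (s + t) Hz) (expoE Hf t Hv).
have Hv' : iter n f (\sum_(k < n) (t ^+ k / (k`!)%:R) *: iter k f v) = 0.
  rewrite (islin_sum (islin_iter Hf n)); apply: big1 => k _.
  rewrite (islinZ (islin_iter Hf n)) -iterD.
  by rewrite (iter_zero Hf Hv) ?scaler0 // leq_addr.
rewrite (expoE Hf s Hv').
transitivity (\sum_(i < n) \sum_(j < n) G i j); last first.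
  apply: eq_bigr => i _.
  rewrite (islin_sum (islin_iter Hf i)) scaler_sumr; apply: eq_bigr => j _.
  by rewrite (islinZ (islin_iter Hf i)) scalerA -iterD.
rewrite -(cauchy G1 G2); apply: eq_bigr => k _.
rewrite addrC exprDn mulr_suml scaler_suml; apply: eq_bigr => i _.
have Hik : (i <= k)%N by rewrite -ltnS ltn_ord.
rewrite /G /a subnKC //; congr (_ *: _).
by rewrite -mulr_natr [_ * s ^+ i]mulrC (coef_split HF s t Hik).
Qed.

Lemma natr_inj : [pchar F] =i pred0 -> injective (fun i : nat => i%:R : F).
Proof.
move=> HF i j /= Hij.
wlog Hle : i j Hij / (j <= i)%N.
  move=> W; case: (leqP j i) => H; first exact: W.
  by apply/esym/W; [rewrite Hij | apply: ltnW].
have : ((i - j)%N%:R == 0 :> F) by rewrite natrB // Hij subrr.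
rewrite ((pcharf0P F).1 HF) subn_eq0 => Hij'.
by apply/eqP; rewrite eqn_leq Hij' Hle.
Qed.

Lemma poly_uniq : [pchar F] =i pred0 -> forall p q : {poly F},
  (forall t, p.[t] = q.[t]) -> p = q.
Proof.
move=> HF p q H; apply/eqP; rewrite -subr_eq0; apply/negPn/negP => Hr.
pose rs := [seq (i%:R : F) | i <- iota 0 (size (p - q))].
have Hall : all (root (p - q)) rs.
  by apply/allP => z /mapP [i _ ->]; rewrite /root hornerD hornerN H subrr.
have Hu : uniq rs by rewrite map_inj_uniq ?iota_uniq //; apply: natr_inj.
by have := max_poly_roots Hr Hall Hu; rewrite size_map size_iota ltnn.
Qed.

Lemma expo_triv U (f : U -> U) : islin f -> forall t v, f v = 0 -> expo f t v = v.
Proof.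
move=> Hf t v Hv; have H1 : iter 1 f v = 0 by [].
by rewrite (expoE Hf t H1) big_ord1 /= expr0 divr1 scale1r.
Qed.

Lemma expo_two U (f : U -> U) : islin f -> forall t v, f (f v) = 0 ->
  expo f t v = v + t *: f v.
Proof.
move=> Hf t v Hv; have H2 : iter 2 f v = 0 by [].
by rewrite (expoE Hf t H2) !big_ord_recl big_ord0 /= addr0 expr0 expr1 !divr1 scale1r.
Qed.

Lemma bilZl U W T (b : U -> W -> T) : (forall w, islin (fun u => b u w)) ->
  forall a u w, b (a *: u) w = a *: b u w.
Proof. by move=> H a u w; apply: (islinZ (H w)). Qed.

Lemma bilZr U W T (b : U -> W -> T) : (forall u, islin (b u)) ->
  forall a u w, b u (a *: w) = a *: b u w.
Proof. by move=> H a u w; apply: (islinZ (H u)). Qed.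

End Expo.

Section Cyc.
Variable F : fieldType.

Lemma inspan_nth (V : lmodType F) (s : seq V) i : (i < size s)%N -> inspan s s`_i.
Proof.
move=> Hi; exists (fun j : 'I_(size s) => ((j : nat) == i)%:R).
rewrite (bigD1 (Ordinal Hi)) //= eqxx scale1r big1 ?addr0 // => j Hj.
have -> : ((j : nat) == i) = false.
  by apply/negbTE; apply: contra Hj => /eqP Hj; apply/eqP/val_inj.
by rewrite scale0r.
Qed.

Lemma inspan0 (V : lmodType F) (s : seq V) : inspan s 0.
Proof. by exists (fun _ => 0); rewrite big1 // => j _; rewrite scale0r. Qed.

Lemma locfin_nil (V : lmodType F) (f : V -> V) : islin f -> locnil f -> locfin f.
Proof.
move=> Hf Hn v; have [n Hv] := Hn v.
pose s := mkseq (fun k => iter k f v) n.+1.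
exists s; split.
  have H0 : (0 < size s)%N by rewrite size_mkseq.
  by have := @inspan_nth V s 0 H0; rewrite nth_mkseq.
move=> u Hu; have Hi : (index u s < size s)%N by rewrite index_mem.
rewrite -(nth_index 0 Hu); move: Hi; rewrite size_mkseq => Hi.
rewrite nth_mkseq // -iterS.
case: (ltnP (index u s).+1 n.+1) => H.
  have H0 : ((index u s).+1 < size s)%N by rewrite size_mkseq.
  by have := @inspan_nth V s (index u s).+1 H0; rewrite nth_mkseq.
by rewrite (iter_zero Hf Hv (ltnW H)); apply: inspan0.
Qed.

Lemma findim_rV n : @findim F 'rV[F]_n.+1.
Proof.
exists (mkseq (fun k => delta_mx 0 (inord k)) n.+1) => v.
exists (fun i => v 0 (inord i)).
rewrite [LHS]row_sum_delta.
rewrite -(big_mkord xpredT (fun i => v 0 (inord i) *: (mkseq (fun k => delta_mx 0 (inord k)) n.+1)`_i)).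
rewrite size_mkseq big_mkord; apply: eq_bigr => i _.
by rewrite nth_mkseq // inord_val.
Qed.

Variable n : nat.
Definition shift (c : 'rV[F]_n.+1) : 'rV[F]_n.+1 :=
  \row_(j < n.+1) (if (j : nat) is k.+1 then c 0 (inord k) else 0).

Lemma shift_lin : islin shift.
Proof.
move=> a c d; apply/rowP => j; rewrite !mxE.
by case: j => [[|k] Hj] /=; rewrite ?mulr0 ?addr0 // !mxE.
Qed.

Variables (U : lmodType F) (E : U -> U) (u : U).
Hypothesis HE : islin E.
Hypothesis Hnz : iter n.+1 E u = 0.
Hypothesis Hmin : iter n E u != 0.

Definition psi (c : 'rV[F]_n.+1) : U := \sum_(k < n.+1) c 0 k *: iter k E u.

Lemma psi_lin : islin psi.
Proof.
move=> a c d; rewrite /psi scaler_sumr -big_split; apply: eq_bigr => k _.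
by rewrite !mxE scalerDl scalerA.
Qed.

Lemma psi_comm c : psi (shift c) = E (psi c).
Proof.
rewrite /psi big_ord_recl.
have -> : shift c 0 ord0 = 0 by rewrite mxE.
rewrite scale0r add0r (islin_sum HE) big_ord_recr /=.
rewrite (islinZ HE) -iterS Hnz scaler0 addr0.
apply: eq_bigr => j _; rewrite (islinZ HE) -iterS.
have -> : shift c 0 (lift ord0 j) = c 0 (widen_ord (leqnSn n) j).
  rewrite mxE /=; congr (c 0 _).
  by apply: val_inj; rewrite /= add0n inordK // ltnS ltnW.
by [].
Qed.

Lemma psi_e0 : psi (delta_mx 0 ord0) = u.
Proof.
rewrite /psi big_ord_recl big1 ?addr0.
  by rewrite mxE !eqxx /= scale1r.
by move=> j _; rewrite !mxE eqxx andTb eq_sym (negbTE (neq_lift _ _)) scale0r.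
Qed.

Lemma psi_inj : injective psi.
Proof.
move=> c1 c2 H; have Hd : psi (c1 - c2) = 0 by rewrite (islinB psi_lin) H subrr.
apply/eqP; rewrite -subr_eq0; apply/eqP; move: (c1 - c2) Hd => d Hd.
suff Hk : forall k, (k < n.+1)%N -> d 0 (inord k) = 0.
  by apply/rowP => j; rewrite mxE; have := Hk j (ltn_ord j); rewrite inord_val.
elim/ltn_ind => k IH Hk.
have Hit := islin_iter HE (n - k).
have : iter (n - k) E (psi d) = 0 by rewrite Hd (islin0 Hit).
rewrite /psi (islin_sum Hit) (bigD1 (inord k)) //= big1 ?addr0.
  rewrite (islinZ Hit) -iterD inordK // subnK; last by rewrite -ltnS.
  by move/eqP; rewrite scaler_eq0 (negbTE Hmin) orbF => /eqP.
move=> j Hj; rewrite (islinZ Hit) -iterD.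
case: (ltngtP j k) => Hjk.
- by have := IH j Hjk (ltn_ord j); rewrite inord_val => ->; rewrite scale0r.
- rewrite (iter_zero HE Hnz) ?scaler0 //.
  have := ltn_ord j; lia.
- by exfalso; move/negP: Hj; apply; apply/eqP/val_inj; rewrite /= inordK // Hjk.
Qed.

End Cyc.

Lemma scaleFo (F : fieldType) (a x : F) : a *: (x : F^o) = a * x.
Proof. by []. Qed.

Section GSide.
Variables (F : fieldType) (g : lmodType F) (br : g -> g -> g).
Variable C : gmod br -> Prop.
Variable du : forall V : gmod br, (V -> F) -> Prop.
Hypothesis HC : good_category C.
Hypothesis Hdu : dual_category C du.

Local Notation natfam := (natfamily (@gcar F g br)).

Lemma gact_lin (V : gmod br) z : islin (gact z : V -> V).
Proof. exact: (gact_rep V).1. Qed.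

Lemma ghom_lin (V W : gmod br) (al : V -> W) : ghom al -> islin al.
Proof. by case. Qed.

Lemma du_lin (V : gmod br) phi : C V -> @du V phi -> islinF phi.
Proof. by move=> HV; apply: (Hdu.1 V HV).1. Qed.

Lemma du_comb (V : gmod br) phi psi a : C V -> @du V phi -> @du V psi ->
  @du V (fun v => a * phi v + psi v).
Proof. by move=> HV; apply: (Hdu.1 V HV).2.2.1. Qed.

Lemma du_scale (V : gmod br) phi a : C V -> @du V phi -> @du V (fun v => a * phi v + 0).
Proof.
move=> HV Hp; apply: (du_comb (psi := fun _ => 0)) => //.
exact: (Hdu.1 V HV).2.1.
Qed.

Lemma du_sep (V : gmod br) (u : V) : C V -> (forall phi, @du V phi -> phi u = 0) -> u = 0.
Proof.
move=> HV H; apply/eqP/negPn/negP => Hu.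
have [phi [Hp Hpu]] := (Hdu.1 V HV).2.2.2.1 u Hu.
by move: Hpu; rewrite H ?eqxx.
Qed.

Lemma Mg_lin m (V : gmod br) : Mg C du m -> C V -> islin (m V).
Proof. by move=> [[H _] _] HV; case: (H V HV). Qed.

Lemma Mg_du m (V : gmod br) phi : Mg C du m -> C V -> @du V phi -> @du V (fun v => phi (m V v)).
Proof. by move=> [[H _] _] HV; case: (H V HV) => _; apply. Qed.

Lemma Mg_nat m (V W : gmod br) (al : V -> W) : Mg C du m -> C V -> C W -> ghom al ->
  forall v, al (m V v) = m W (al v).
Proof. by move=> [[_ H] _] HV HW Hal; apply: H. Qed.

Lemma Mg_tens m (V W T : gmod br) (b : V -> W -> T) : Mg C du m -> C V -> C W -> C T ->
  gtensor b -> forall v w, m T (b v w) = b (m V v) (m W w).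
Proof. by move=> [_ [H _]]; apply: H. Qed.

Lemma Mg_triv m (V : gmod br) : Mg C du m -> C V -> gtriv V -> forall v, m V v = v.
Proof. by move=> [_ [_ H]]; apply: H. Qed.

Lemma Mg_ext m m' : Mg C du m -> (forall V, C V -> forall v, m' V v = m V v) -> Mg C du m'.
Proof.
move=> Hm E; split; [split|split].
- move=> V HV; split.
    by move=> a u v; rewrite !E //; apply: (Mg_lin Hm HV).
  move=> phi Hp.
  have -> : (fun v => phi (m' V v)) = (fun v => phi (m V v)).
    by apply: functional_extensionality => v; rewrite E.
  exact: (Mg_du Hm HV).
- by move=> V W al HV HW Hal v; rewrite !E //; apply: (Mg_nat Hm HV HW Hal).
- by move=> V W T b HV HW HT Hb v w; rewrite !E //; apply: (Mg_tens Hm HV HW HT Hb).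
- by move=> V0 HV0 Ht v; rewrite E //; apply: (Mg_triv Hm HV0 Ht).
Qed.

Definition Ygood (y : natfam) : Prop :=
  (forall (V W : gmod br) (al : V -> W), C V -> C W -> ghom al ->
     forall v, al (y V v) = y W (al v)) /\
  (forall (V W T : gmod br) (b : V -> W -> T), C V -> C W -> C T -> gtensor b ->
     forall v w, y T (b v w) = b (y V v) w + b v (y W w)) /\
  (forall V0 : gmod br, C V0 -> gtriv V0 -> forall v, y V0 v = 0).

Definition CW (y : natfam) (f : natfam -> F) (e d : F) : Prop :=
  exists (V : gmod br) (phi : V -> F) (v : V), C V /\ @du V phi /\
    (forall m, Mg C du m -> f m = phi (m V v)) /\ e = phi v /\ d = phi (y V v).

Definition y0 : natfam := fun V v => 0.

Lemma y0_good : Ygood y0.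
Proof.
split; [|split].
- by move=> V W al _ _ Hal v; rewrite /y0 (islin0 (ghom_lin Hal)).
- move=> V W T b _ _ _ [[[Hb1 Hb2] _] _] v w.
  by rewrite /y0 (islin0 (Hb1 _)) (islin0 (Hb2 _)) addr0.
- by [].
Qed.

Section CWsec.
Variable y : natfam.
Hypothesis Hy : Ygood y.

Lemma CW_basic (V : gmod br) (phi : V -> F) (v : V) : C V -> @du V phi ->
  CW y (fun m => phi (m V v)) (phi v) (phi (@y V v)).
Proof. by move=> HV Hp; exists V, phi, v. Qed.

Lemma CW_ext f f' e d : CW y f e d -> (forall m, Mg C du m -> f' m = f m) -> CW y f' e d.
Proof.
move=> [V [phi [v [HV [Hp [Hf [He Hd]]]]]]] E.
exists V, phi, v; split; [done|split; [done|split; [|done]]].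
by move=> m Hm; rewrite E // Hf.
Qed.

Lemma CW_inCoord f e d : CW y f e d -> coordg C du f.
Proof.
move=> [V [phi [v [HV [Hp [Hf _]]]]]].
by exists V, phi, v.
Qed.

Lemma CW_add f1 f2 e1 e2 d1 d2 : CW y f1 e1 d1 -> CW y f2 e2 d2 ->
  CW y (fun m => f1 m + f2 m) (e1 + e2) (d1 + d2).
Proof.
move=> [V [phi [v [HV [Hp [Hf [He Hd]]]]]]] [W [chi [w [HW [Hc [Hf2 [He2 Hd2]]]]]]].
have [S [i1 [i2 [p1 [p2 [HS Hds]]]]]] := HC.2.1 V W HV HW.
have Hds' := Hds.
move: Hds' => [Hi1 [Hi2 [Hp1 [Hp2 [E11 [E22 [E12 [E21 _]]]]]]]].
pose psi := fun s => phi (p1 s) + chi (p2 s).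
have Hpsi : @du S psi.
  by apply/(Hdu.2.2.1 V W S i1 i2 p1 p2 HV HW HS Hds); exists phi, chi.
have P1 : p1 (i1 v + i2 w) = v by rewrite (islinD (ghom_lin Hp1)) E11 E12 addr0.
have P2 : p2 (i1 v + i2 w) = w by rewrite (islinD (ghom_lin Hp2)) E21 E22 add0r.
exists S, psi, (i1 v + i2 w); do !split => //.
- move=> m Hm; rewrite /psi (Mg_nat Hm HS HV Hp1) (Mg_nat Hm HS HW Hp2) P1 P2.
  by rewrite Hf // Hf2.
- by rewrite /psi P1 P2 He He2.
- by rewrite /psi (Hy.1 _ _ _ HS HV Hp1) (Hy.1 _ _ _ HS HW Hp2) P1 P2 Hd Hd2.
Qed.

Lemma CW_scale f e d a : CW y f e d -> CW y (fun m => a * f m) (a * e) (a * d).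
Proof.
move=> [V [phi [v [HV [Hp [Hf [He Hd]]]]]]].
exists V, (fun v => a * phi v + 0), v; do !split.
- exact: HV.
- exact: du_scale.
- by move=> m Hm; rewrite Hf // addr0.
- by rewrite He addr0.
- by rewrite Hd addr0.
Qed.

Lemma CW_const c : CW y (fun _ => c) c 0.
Proof.
have [V0 [HV0 Ht]] := HC.2.2.2.1.
have [[v0 [Hv0 _]] _] := Ht.
have [phi0 [Hp0 Hpv]] := (Hdu.1 V0 HV0).2.2.2.1 v0 Hv0.
exists V0, (fun v => (c / phi0 v0) * phi0 v + 0), v0; do !split.
- exact: HV0.
- exact: du_scale.
- by move=> m Hm; rewrite (Mg_triv Hm HV0 Ht) addr0 divfK.
- by rewrite addr0 divfK.
- by rewrite Hy.2.2 // (islinF0 (du_lin HV0 Hp0)) mulr0 addr0.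
Qed.

Lemma CW_mul f1 f2 e1 e2 d1 d2 : CW y f1 e1 d1 -> CW y f2 e2 d2 ->
  CW y (fun m => f1 m * f2 m) (e1 * e2) (d1 * e2 + e1 * d2).
Proof.
move=> [V [phi [v [HV [Hp [Hf [He Hd]]]]]]] [W [chi [w [HW [Hc [Hf2 [He2 Hd2]]]]]]].
have [T [b [HT Hb]]] := HC.2.2.1 V W HV HW.
have Hb' := Hb; move: Hb' => [[[Hb1 Hb2] [Hex _]] Hrule].
have Lp := du_lin HV Hp; have Lc := du_lin HW Hc.
have Hbeta : @isbilin F V W F^o (fun v w => phi v * chi w).
  split.
    by move=> w' a u u'; rewrite /= scaleFo (islinFD Lp) (islinFZ Lp) mulrDl mulrA.
  by move=> u a w1 w2; rewrite /= scaleFo (islinFD Lc) (islinFZ Lc) mulrDr mulrCA.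
have [L [HL HLb]] := Hex _ _ Hbeta.
have HLd : @du T L by apply: (Hdu.2.2.2 V W T b HV HW HT Hb phi chi L Hp Hc HL HLb).
exists T, L, (b v w); do !split => //.
- by move=> m Hm; rewrite (Mg_tens Hm HV HW HT Hb) HLb Hf // Hf2.
- by rewrite HLb He He2.
- rewrite (Hy.2.1 _ _ _ _ HV HW HT Hb) (islinD HL) !HLb Hd Hd2 He He2.
  by [].
Qed.

Lemma CW_poly h eh dh : CW y h eh dh -> forall p : {poly F},
  CW y (fun m => p.[h m]) p.[eh] (p^`().[eh] * dh).
Proof.
move=> Hh; elim/poly_ind => [|p c IH].
  rewrite deriv0 !horner0 mul0r.
  by apply: (CW_ext (CW_const 0)) => m _; rewrite horner0.
have H := CW_add (CW_mul IH Hh) (CW_const c).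
rewrite hornerMXaddC derivMXaddC hornerD hornerMX.
have -> : (p.[eh] + p^`().[eh] * eh) * dh = p^`().[eh] * dh * eh + p.[eh] * dh + 0.
  by rewrite addr0 mulrDl addrC mulrAC.
by apply: (CW_ext H) => m _; rewrite hornerMXaddC.
Qed.

End CWsec.

Hypothesis HF : [pchar F] =i pred0.
Variable x : g.
Hypothesis hx : x != 0.
Hypothesis H1 : forall V : gmod br, C V -> locnil (gact x : V -> V).
Hypothesis H2 : forall V : gmod br, C V -> forall t : F,
  @EndDu F (gmod br) (@gcar F g br) du V (expo (gact x : V -> V) t).

Lemma expfam_Mg t : Mg C du (expfam br x t).
Proof.
split; [split|split].
- by move=> V HV; apply: H2.
- move=> V W al HV HW [Hal Hc] v; rewrite /expfam.
  exact: (expo_nat (@gact_lin V x) (@gact_lin W x) Hal (H1 HV) (Hc x)).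
- move=> V W T b HV HW HT [[[Hb1 Hb2] _] Hr] v w; rewrite /expfam.
  exact: (expo_tensor HF (@gact_lin V x) (@gact_lin W x) (@gact_lin T x) (H1 HV) (H1 HW) Hb1 Hb2 (Hr x)).
- move=> V0 HV0 [_ Ht] v; rewrite /expfam.
  by apply: expo_triv; [exact: gact_lin | exact: Ht].
Qed.

Lemma Ufam_Mg m : Ufam C x m -> Mg C du m.
Proof. by move=> [t Ht]; apply: (Mg_ext (expfam_Mg t)). Qed.

Lemma exists_w : exists (V : gmod br) (w : V), C V /\ gact x w != 0 /\ gact x (gact x w) = 0.
Proof.
apply: NNPP => Hn; apply: (negP hx); apply/eqP; apply: HC.2.2.2.2 => V HV v.
apply: NNPP => Hxv; apply: Hn.
pose u := gact x v.
have Hu : u != 0 by apply/eqP.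
have [k Hk] := H1 HV u.
have Pex : exists n, iter n (gact x) u == 0 by exists k; apply/eqP.
case: (ex_minnP Pex) => n /eqP Hnz Hmin.
case: n Hnz Hmin => [|n] Hnz Hmin; first by move: Hu; rewrite -Hnz eqxx.
exists V, (iter n (gact x) v); split => //; split.
  rewrite -iterS iterSr; apply/negP => /eqP H0.
  by have := Hmin n (introT eqP H0); rewrite ltnn.
by rewrite -!iterS iterSr; exact: Hnz.
Qed.

Lemma h_exists : exists h : natfam -> F,
  (forall y, Ygood y -> exists dh, CW y h 0 dh) /\ forall t, h (expfam br x t) = t.
Proof.
have [V [w [HV [Hxw Hxxw]]]] := exists_w.
have [phi0 [Hp0 Ha]] := (Hdu.1 V HV).2.2.2.1 _ Hxw.
pose a := phi0 (gact x w).
exists (fun m => (1 / a) * (phi0 (m V w) + (- phi0 w))); split.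
  move=> y Hy; eexists.
  have H := CW_scale (1 / a) (CW_add Hy (CW_basic y w HV Hp0) (CW_const Hy (- phi0 w))).
  by rewrite addrN mulr0 in H; exact: H.
move=> t; rewrite /expfam (expo_two (@gact_lin V x) t Hxxw).
have Lp := du_lin HV Hp0.
by rewrite (islinFD Lp) (islinFZ Lp) addrAC addrN add0r div1r mulrC mulfK.
Qed.

Lemma coord_poly (V : gmod br) (phi : V -> F) (v : V) : C V -> @du V phi ->
  exists q : {poly F}, (forall t, phi (expfam br x t V v) = q.[t]) /\ q`_1 = phi (gact x v).
Proof.
move=> HV Hp; have Lp := du_lin HV Hp; have [n Hn] := H1 HV v.
exists (\poly_(k < n) (phi (iter k (gact x) v) / (k`!)%:R)); split.
  by move=> t; rewrite /expfam (expo_poly (@gact_lin V x) Lp Hn).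
rewrite coef_poly; case: ltnP => Hn1; first by rewrite /= divr1.
by rewrite -[gact x v]/(iter 1 (gact x) v) (iter_zero (@gact_lin V x) Hn Hn1) (islinF0 Lp).
Qed.

Lemma coord_poly' f : coordg C du f -> exists p : {poly F}, forall t, f (expfam br x t) = p.[t].
Proof.
move=> [V [phi [v [HV [Hp Hf]]]]].
have [q [Hq _]] := coord_poly v HV Hp.
by exists q => t; rewrite Hf; [exact: Hq | exact: expfam_Mg].
Qed.

Lemma poly_coord p : exists f, coordg C du f /\ forall t, f (expfam br x t) = p.[t].
Proof.
have [h [Hh Ht]] := h_exists; have [dh Hdh] := Hh y0 y0_good.
exists (fun m => p.[h m]); split; first exact: (CW_inCoord (CW_poly y0_good Hdh p)).
by move=> t; rewrite Ht.
Qed.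

Lemma zclosed_U : zclosedg C du (Ufam C x).
Proof.
exists (fun f => coordg C du f /\ forall t, f (expfam br x t) = 0); split.
  by move=> f [].
move=> m; split.
  move=> Hu; split; first exact: (Ufam_Mg Hu).
  move=> f [[V [phi [v [HV [Hp Hf]]]]] Hz].
  case: (Hu) => t Ht.
  rewrite (Hf m (Ufam_Mg Hu)) /coordfun Ht // -(Hz t) (Hf _ (expfam_Mg t)).
  by [].
move=> [Hm HS].
have [h [Hh Ht]] := h_exists; have [dh Hdh] := Hh y0 y0_good.
exists (h m) => V HV v.
apply/eqP; rewrite -subr_eq0; apply/eqP; apply: (du_sep HV) => phi Hp.
have Lp := du_lin HV Hp; rewrite (islinFB Lp).
have [q [Hq _]] := coord_poly v HV Hp.
have HG := CW_add y0_good (CW_basic y0 v HV Hp) (CW_scale (-1) (CW_poly y0_good Hdh q)).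
have := HS _ (conj (CW_inCoord HG) _).
rewrite Hq mulN1r => ->; first by [].
by move=> t; rewrite /= Ht Hq mulN1r subrr.
Qed.

Lemma expfam_inj s t : (forall V : gmod br, C V -> forall v : V,
  expfam br x s V v = expfam br x t V v) -> s = t.
Proof.
move=> E; have [V [w [HV [Hxw Hxxw]]]] := exists_w.
have := E V HV w; rewrite /expfam !(expo_two (@gact_lin V x) _ Hxxw) => /addrI /eqP.
rewrite -subr_eq0 -scalerBl scaler_eq0 (negbTE Hxw) orbF subr_eq0 => /eqP //.
Qed.

Definition polyof (f : natfam -> F) : {poly F} :=
  epsilon (inhabits 0) (fun p => forall t, f (expfam br x t) = p.[t]).

Lemma polyofP f : (exists p : {poly F}, forall t, f (expfam br x t) = p.[t]) ->
  forall t, f (expfam br x t) = (polyof f).[t].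
Proof. by move=> H; apply: (epsilon_spec (inhabits 0) _ H). Qed.

Lemma Lie_U (yy : natfam) : Lieg C du (Ufam C x) yy <->
  exists c : F, forall V : gmod br, C V -> forall v : V, yy V v = c *: gact x v.
Proof.
split.
  move=> [[[_ Hnat] [Htens [Htriv _]]] [delta [[Hwd Hcf] Hvan]]].
  have Hy : Ygood yy by split; [exact: Hnat | split; [exact: Htens | exact: Htriv]].
  have [h [Hh Ht]] := h_exists; have [dh Hdh] := Hh yy Hy.
  exists dh => V HV v.
  apply/eqP; rewrite -subr_eq0; apply/eqP; apply: (du_sep HV) => phi Hp.
  have Lp := du_lin HV Hp; rewrite (islinFB Lp) (islinFZ Lp).
  have [q [Hq Hq1]] := coord_poly v HV Hp.
  have HG := CW_add Hy (CW_basic yy v HV Hp) (CW_scale (-1) (CW_poly Hy Hdh q)).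
  have HGc := CW_inCoord HG.
  move: HG => [S [psi [s [HS [Hps [HGf [_ Hd]]]]]]].
  have Hcs : coordg C du (coordfun psi s) by exists S, psi, s.
  have E1 := Hwd _ _ HGc Hcs HGf.
  rewrite (Hcf S psi s HS Hps) -Hd in E1.
  have E0 : delta (fun m => phi (m V v) + (-1) * q.[h m]) = 0.
    apply: Hvan => // m Hm.
    case: (Hm) => t Hmt.
    rewrite (HGf m (Ufam_Mg Hm)) Hmt // -(HGf _ (expfam_Mg t)).
    by rewrite /= Ht Hq mulN1r subrr.
  rewrite E0 horner_coef0 coef_deriv Hq1 mulr1n mulN1r in E1.
  by rewrite mulrC -E1.
move=> [c Hc].
pose delta := fun f : natfam -> F => c * (polyof f)`_1.
have Hdelta : isDelta C (@ghom F g br) (@gtensor F g br) (@gtriv F g br) du yy delta.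
  split.
    move=> f1 f2 Hf1 Hf2 E; rewrite /delta; congr (_ * _).
    have [p1 Hp1] := coord_poly' Hf1; have [p2 Hp2] := coord_poly' Hf2.
    have -> : polyof f1 = polyof f2; last by [].
    apply: (poly_uniq HF) => t.
    rewrite -(polyofP (ex_intro _ p1 Hp1)) -(polyofP (ex_intro _ p2 Hp2)).
    by apply: E; exact: expfam_Mg.
  move=> V phi v HV Hp; rewrite /delta.
  have [q [Hq Hq1]] := coord_poly v HV Hp.
  have -> : polyof (coordfun phi v) = q.
    by apply: (poly_uniq HF) => t; rewrite -polyofP; [exact: Hq | exists q; exact: Hq].
  by rewrite Hq1 Hc // (islinFZ (du_lin HV Hp)).
split; last first.
  exists delta; split => // f Hf Hz; rewrite /delta.
  have -> : polyof f = 0.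
    apply: (poly_uniq HF) => t; rewrite horner0 -polyofP; last exact: coord_poly' Hf.
    by apply: Hz; exists t.
  by rewrite coef0 mulr0.
split; [split|split; [|split]].
- move=> V HV; split.
    by move=> a u v; rewrite !Hc // (@gact_lin V x) scalerDr !scalerA mulrC.
  move=> phi Hp.
  have -> : (fun v => phi (yy V v)) = (fun v => c * phi (gact x v) + 0).
    by apply: functional_extensionality => v; rewrite Hc // (islinFZ (du_lin HV Hp)) addr0.
  by apply: du_scale => //; apply: (Hdu.1 V HV).2.2.2.2.
- by move=> V W al HV HW [Hal Hcom] v; rewrite !Hc // (islinZ Hal) Hcom.
- move=> V W T b HV HW HT [[[Hb1 Hb2] _] Hr] v w; rewrite !Hc // Hr scalerDr.
  by rewrite -(bilZl Hb1) -(bilZr Hb2).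
- by move=> V0 HV0 [_ Ht] v; rewrite Hc // Ht scaler0.
- by exists delta.
Qed.


Local Notation sfam := (natfamily (@scar F)).

Lemma sE_lin (U : smod F) : inCs C x U -> islin (@sE F U).
Proof. by case. Qed.

Lemma sE_nil (U : smod F) : inCs C x U -> locnil (@sE F U).
Proof.
move=> [HE [_ [V [HV [io [Hio [Hinj Hc]]]]]]] u.
have [n Hn] := H1 HV (io u).
by exists n; apply: Hinj; rewrite (iter_comm Hc) Hn (islin0 Hio).
Qed.

Definition dfam (t : F) : sfam := fun U => expo (@sE F U) t.

Lemma Ms_ext (m m' : sfam) : Ms C x m ->
  (forall U, inCs C x U -> forall u, m' U u = m U u) -> Ms C x m'.
Proof.
move=> [[HE Hn] [Ht Htr]] E; split; [split|split].
- move=> U HU; have [Hl Hd] := HE U HU; split.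
    by move=> a u v; rewrite !E //; apply: Hl.
  move=> phi Hp a u v; rewrite /= !E //; exact: (Hd phi Hp).
- by move=> U W al HU HW Hal v; rewrite !E //; apply: Hn.
- by move=> U W T b HU HW HT Hb v w; rewrite !E //; apply: Ht.
- by move=> U HU Htv v; rewrite E //; apply: Htr.
Qed.

Lemma dfam_Ms t : Ms C x (dfam t).
Proof.
split; [split|split].
- move=> U HU; split; first exact: (expo_lin (sE_lin HU) (sE_nil HU)).
  move=> phi Hp; apply: (islin_comp (expo_lin (sE_lin HU) (sE_nil HU) t) (islinF_lin Hp)).
- move=> U W al HU HW [Hal Hc] v; rewrite /dfam.
  exact: (expo_nat (sE_lin HU) (sE_lin HW) Hal (sE_nil HU) Hc).
- move=> U W T b HU HW HT [[[Hb1 Hb2] _] Hr] v w; rewrite /dfam.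
  exact: (expo_tensor HF (sE_lin HU) (sE_lin HW) (sE_lin HT) (sE_nil HU) (sE_nil HW) Hb1 Hb2 Hr).
- move=> U HU [_ Ht] v; rewrite /dfam.
  by apply: expo_triv; [exact: sE_lin | exact: Ht].
Qed.

Lemma cyc (m : sfam) (Hm : Ms C x m) (U : smod F) (HU : inCs C x U) (u : U) :
  exists n (c : nat -> F), iter n (@sE F U) u = 0 /\
    m U u = \sum_(k < n) c k *: iter k (@sE F U) u.
Proof.
have HE := sE_lin HU.
have [k0 Hk] := sE_nil HU u.
have Pex : exists n, iter n (@sE F U) u == 0 by exists k0; apply/eqP.
case: (ex_minnP Pex) => n /eqP Hnz Hmin.
case: n Hnz Hmin => [|n] Hnz Hmin.
  exists 0%N, (fun _ => 0); split => //; rewrite big_ord0.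
  have [[Hl _] _] := Hm; have [Hlin _] := Hl U HU.
  by rewrite -[u]/(iter 0 (@sE F U) u) Hnz (islin0 Hlin).
have Hmin' : iter n (@sE F U) u != 0.
  by apply/negP => /Hmin; rewrite ltnn.
pose Z := SMod (@shift F n).
have HZ : inCs C x Z.
  split; first exact: shift_lin.
  split; first exact: findim_rV.
  move: HU => [_ [_ [V [HV [io [Hio [Hinj Hc]]]]]]].
  exists V; split => //; exists (fun c => io (psi (@sE F U) u c)); split.
    exact: (islin_comp (@psi_lin F n U (@sE F U) u) Hio).
  split.
    by move=> c1 c2 /Hinj /(psi_inj HE Hnz Hmin').
  by move=> c; rewrite /= (psi_comm HE Hnz) Hc.
have Hsh : @shom F Z U (psi (@sE F U) u).
  split; first exact: psi_lin.
  by move=> c; rewrite /= (psi_comm HE Hnz).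
have [[_ Hnat] _] := Hm.
exists n.+1, (fun k => m Z (delta_mx 0 ord0) 0 (inord k)); split => //.
rewrite -{1}(@psi_e0 F n U (@sE F U) u) -(Hnat Z U _ HZ HU Hsh) /psi.
by apply: eq_bigr => k _; rewrite inord_val.
Qed.

Lemma ilf : int_loc_fin C du x.
Proof.
split.
  by move=> V HV; exact: (locfin_nil (@gact_lin V x) (H1 HV)).
pose D := fun d : sfam => exists t, forall U, inCs C x U -> forall u, d U u = expo (@sE F U) t u.
exists D; split; [|split].
- split; [|split].
  + by move=> d [t Ht]; exact: (Ms_ext (dfam_Ms t) Ht).
  + by exists 0 => U HU u; rewrite /idfam expo0 //; [exact: sE_lin | exact: sE_nil].
  + move=> d1 d2 [t1 E1] [t2 E2]; exists (t1 + t2) => U HU u.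
    by rewrite /compfam E1 // E2 // expoD //; [exact: sE_lin | exact: sE_nil].
- move=> S HS HD m Hm; split => // f Sf.
  have [U [phi [u [HU [Hp Hf]]]]] := HS f Sf.
  have Lp : islinF phi := Hp.
  rewrite (Hf m Hm) /coordfun.
  have [n [c [Hn Hmu]]] := cyc Hm HU u.
  have Hz : forall t, phi (expo (@sE F U) t u) = 0.
    move=> t; have HDt : D (dfam t) by exists t.
    have [_ Hz] := HD _ HDt.
    by have := Hz f Sf; rewrite (Hf _ (dfam_Ms t)).
  have Hp0 : \poly_(k < n) (phi (iter k (@sE F U) u) / (k`!)%:R) = 0.
    by apply: (poly_uniq HF) => t; rewrite horner0 -(expo_poly (sE_lin HU) Lp Hn); exact: Hz.
  rewrite Hmu (islinF_sum Lp) big1 // => k _.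
  rewrite (islinFZ Lp).
  have := congr1 (fun p : {poly F} => p`_k) Hp0; rewrite coef_poly ltn_ord coef0 => /eqP.
  by rewrite mulf_eq0 invr_eq0 (negbTE (fact_neq0 HF k)) orbF => /eqP ->; rewrite mulr0.
- move=> d [t Ht] V HV; exists (expo (gact x) t); split; last exact: H2.
  move=> U io HU Hio Hinj Hc u; rewrite Ht //.
  by rewrite (expo_nat (sE_lin HU) (@gact_lin V x) Hio (sE_nil HU) Hc).
Qed.

End GSide.

Unset Implicit Arguments.

Theorem theorem2p35 (F : fieldType) (HF : [pchar F] =i pred0)
  (g : lmodType F) (br : g -> g -> g) (Hlie : is_lie br)
  (C : gmod br -> Prop) (HC : good_category C)
  (du : forall V : gmod br, (V -> F) -> Prop) (Hdu : dual_category C du)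
  (x : g) (hx : x != 0)
  (H1 : forall V : gmod br, C V -> locnil (gact x : V -> V))
  (H2 : forall V : gmod br, C V -> forall t : F,
          @EndDu F (gmod br) (@gcar F g br) du V (expo (gact x : V -> V) t)) :
  int_loc_fin C du x /\
  (* (a) *)
  (forall t : F, Mg C du (expfam br x t)) /\
  (* (b) u_x is a monoid morphism (F,+) -> M ... *)
  ((forall V : gmod br, C V -> forall v : V, expfam br x 0 V v = v) /\
   (forall (s t : F) (V : gmod br), C V -> forall v : V,
      expfam br x (s + t) V v = expfam br x s V (expfam br x t V v))) /\
  (* ... and a closed embedding of sets with coordinate rings *)
  ((forall s t : F, (forall V : gmod br, C V -> forall v : V,
       expfam br x s V v = expfam br x t V v) -> s = t) /\
   (forall f, coordg C du f -> exists p : {poly F}, forall t : F,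
       f (expfam br x t) = p.[t]) /\
   (forall p : {poly F}, exists f, coordg C du f /\ forall t : F,
       f (expfam br x t) = p.[t]) /\
   zclosedg C du (Ufam C x)) /\
  (* (c) Lie(U_x) = F x *)
  (forall y : natfamily (@gcar F g br), Lieg C du (Ufam C x) y <->
     exists c : F, forall V : gmod br, C V -> forall v : V,
       y V v = c *: gact x v).
Proof.
split; first exact: (ilf HF H1 H2).
split; first exact: (expfam_Mg HF H1 H2).
split.
  split.
    by move=> V HV v; rewrite /expfam expo0 //; [exact: gact_lin | exact: H1].
  by move=> s t V HV v; rewrite /expfam expoD //; [exact: gact_lin | exact: H1].
split.
  split; first by move=> s t; apply: (expfam_inj HC hx H1).
  split; first by move=> f; apply: (coord_poly' Hdu HF H1 H2).
  split; first exact: (poly_coord HC Hdu hx H1).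
  exact: (zclosed_U HC Hdu HF hx H1 H2).
exact: (Lie_U HC Hdu HF hx H1 H2).
Qed.
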